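(* Let $P$ and $Q$ be disjoint polytopes in $\mathbb{R}^d$ such that $P$ and $-Q$ are Minkowski equivalent. Then there is a hyperplane separating $P$ and $Q$ which is parallel to a facet of $P$.
   Context: Two polytopes are Minkowski equivalent if they have the same normal fan (the collection of normal cones of their faces). Here $-Q = \{-q : q \in Q\}$. A hyperplane $H$ separates $P$ and $Q$ if $P$ and $Q$ lie in the two opposite closed half-spaces determined by $H$ (here it can be taken to be strict separation: there is a normal vector $y$ and a real $c$ with $\max_{x\in P}\langle x,y\rangle < c < \min_{x\in Q}\langle x,y\rangle$); it is parallel to a facet of $P$ if its normal vector is normal to that facet. *)

(* Defs.v *)
From HB Require Import structures.
From mathcomp Require Import all_boot all_order all_algebra.
From mathcomp Require Import boolp classical_sets reals.
Set Implicit Arguments. Unset Strict Implicit. Unset Printing Implicit Defensive.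
Import Order.TTheory GRing.Theory Num.Theory.
Local Open Scope ring_scope.
Local Open Scope classical_set_scope.

Section Polytopes.
Variables (R : realType) (d : nat).
Local Notation vec := 'rV[R]_d.

Definition dotv (x y : vec) : R := \sum_(i < d) x 0 i * y 0 i.

Definition conv_rows n (V : 'M[R]_(n, d)) : set vec :=
  [set x | exists w : 'rV[R]_n,
     (forall i, 0 <= w 0 i) /\ \sum_(i < n) w 0 i = 1 /\ x = w *m V].

(* a (nonempty) polytope: convex hull of finitely many points *)
Definition is_polytope (P : set vec) : Prop :=
  exists n (V : 'M[R]_(n.+1, d)), P = conv_rows V.

Definition oppset (Q : set vec) : set vec := [set x | Q (- x)].

Definition face_in (P : set vec) (y : vec) : set vec :=
  [set x | P x /\ forall z, P z -> dotv z y <= dotv x y].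

Definition is_face (P F : set vec) : Prop :=
  F = set0 \/ exists y, F = face_in P y.

Definition normal_cone (P F : set vec) : set vec :=
  [set y | forall x z, F x -> P z -> dotv z y <= dotv x y].

Definition normal_fan (P : set vec) : set (set vec) :=
  [set N | exists y, N = normal_cone P (face_in P y)].

Definition minkowski_equivalent (P Q : set vec) : Prop :=
  normal_fan P = normal_fan Q.

(* S contains n+1 affinely independent points *)
Definition affdim_ge (S : set vec) (n : nat) : Prop :=
  exists (x0 : vec) (X : 'M[R]_(n, d)),
    S x0 /\ (forall i, S (x0 + row i X)) /\ \rank X = n.

(* the affine hull of S has dimension k (k = -1 iff S is empty) *)
Definition is_affdim (S : set vec) (k : int) : Prop :=
  match k with
  | Posz n => affdim_ge S n /\ ~ affdim_ge S n.+1
  | Negz 0 => S = set0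
  | Negz _ => False
  end.

Definition is_facet (P F : set vec) : Prop :=
  is_face P F /\ exists k : int, is_affdim P k /\ is_affdim F (k - 1).

Definition strictly_separates (P Q : set vec) (y : vec) (c : R) : Prop :=
  (forall x, P x -> dotv x y < c) /\ (forall x, Q x -> c < dotv x y).

End Polytopes.

(* Main.v *)
Require Import Defs.
From HB Require Import structures.
From mathcomp Require Import all_boot all_order all_algebra.
From mathcomp Require Import boolp classical_sets reals.
From mathcomp Require Import ring lra.
Import Order.TTheory GRing.Theory Num.Theory.
Local Open Scope ring_scope.
Local Open Scope classical_set_scope.
Set Implicit Arguments. Unset Strict Implicit. Unset Printing Implicit Defensive.

Section Basics.
Variables (R : realType) (d : nat).
Local Notation vec := 'rV[R]_d.
Local Notation dot := (@dotv R d).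

Lemma dotvE (x y : vec) : dot x y = (x *m y^T) 0 0.
Proof. by rewrite /dotv mxE; apply: eq_bigr => i _; rewrite mxE. Qed.

Lemma dotvC (x y : vec) : dot x y = dot y x.
Proof. by rewrite /dotv; apply: eq_bigr => i _; rewrite mulrC. Qed.

Lemma dotvDl (x y z : vec) : dot (x + y) z = dot x z + dot y z.
Proof. by rewrite /dotv -big_split; apply: eq_bigr => i _; rewrite mxE mulrDl. Qed.

Lemma dotvNl (x z : vec) : dot (- x) z = - dot x z.
Proof. by rewrite /dotv -sumrN; apply: eq_bigr => i _; rewrite mxE mulNr. Qed.

Lemma dotvBl (x y z : vec) : dot (x - y) z = dot x z - dot y z.
Proof. by rewrite dotvDl dotvNl. Qed.

Lemma dotvZl a (x z : vec) : dot (a *: x) z = a * dot x z.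
Proof. by rewrite /dotv mulr_sumr; apply: eq_bigr => i _; rewrite mxE mulrA. Qed.

Lemma dotv0l (z : vec) : dot 0 z = 0.
Proof. by rewrite /dotv big1 // => i _; rewrite mxE mul0r. Qed.

Lemma dotvDr (x y z : vec) : dot z (x + y) = dot z x + dot z y.
Proof. by rewrite !(dotvC z) dotvDl. Qed.
Lemma dotvNr (x z : vec) : dot z (- x) = - dot z x.
Proof. by rewrite !(dotvC z) dotvNl. Qed.
Lemma dotvBr (x y z : vec) : dot z (x - y) = dot z x - dot z y.
Proof. by rewrite !(dotvC z) dotvBl. Qed.
Lemma dotvZr a (x z : vec) : dot z (a *: x) = a * dot z x.
Proof. by rewrite !(dotvC z) dotvZl. Qed.
Lemma dotv0r (z : vec) : dot z 0 = 0.
Proof. by rewrite dotvC dotv0l. Qed.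

Lemma dotv_suml (I : finType) (F : I -> vec) z : dot (\sum_i F i) z = \sum_i dot (F i) z.
Proof.
exact: (big_morph (fun x => dot x z) (fun x y => dotvDl x y z) (dotv0l z)).
Qed.

Lemma dotv_mul m (w : 'rV[R]_m) (V : 'M[R]_(m, d)) y :
  dot (w *m V) y = \sum_i w 0 i * dot (row i V) y.
Proof. by rewrite mulmx_sum_row dotv_suml; apply: eq_bigr => i _; rewrite dotvZl. Qed.

Lemma dotvv_gt0 (x : vec) : x != 0 -> 0 < dot x x.
Proof.
move=> nx; rewrite /dotv lt_neqAle sumr_ge0 ?andbT; last by move=> i _; rewrite -expr2 sqr_ge0.
apply: contra nx; rewrite eq_sym psumr_eq0; last by move=> i _; rewrite -expr2 sqr_ge0.
move=> /allP H; apply/eqP/rowP => i; rewrite mxE.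
by have := H i (mem_index_enum _); rewrite -expr2 sqrf_eq0 => /eqP.
Qed.

Lemma fin_argmin (I : finType) (p : pred I) (f : I -> R) i0 : p i0 ->
  exists2 i, p i & forall j, p j -> f i <= f j.
Proof.
move=> pi0; case: (@arg_minP _ _ I i0 p f pi0) => i pi H.
by exists i.
Qed.

Lemma fin_argmax (I : finType) (f : I -> R) (i0 : I) :
  exists i, forall j, f j <= f i.
Proof.
have [i _ H] := @fin_argmin I predT (fun i => - f i) i0 isT.
by exists i => j; rewrite -lerN2; apply: H.
Qed.

Lemma fin_posbound (I : finType) (f : I -> R) : (forall i, 0 < f i) ->
  exists2 t, 0 < t & forall i, t <= f i.
Proof.
move=> fp; exists (1 + \sum_i (f i)^-1)^-1.
  by rewrite invr_gt0 ltr_wpDr // sumr_ge0 // => i _; rewrite invr_ge0 ltW.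
move=> i; have s0 : 0 < 1 + \sum_i (f i)^-1.
  by rewrite ltr_wpDr // sumr_ge0 // => j _; rewrite invr_ge0 ltW.
rewrite -[f i]invrK lef_pV2 ?posrE ?invr_gt0 //.
rewrite (bigD1 i) //= addrCA ler_wpDr //.
by rewrite ler_wpDr // ?sumr_ge0 // => j _; rewrite invr_ge0 ltW ?fp.
Qed.


Definition ext0 N (c0 : R) (c : 'I_N -> R) : 'I_N.+1 -> R :=
  fun i => match unlift ord0 i with Some j => c j | None => c0 end.

Lemma ext0_0 N c0 (c : 'I_N -> R) : ext0 c0 c ord0 = c0.
Proof. by rewrite /ext0 unlift_none. Qed.

Lemma ext0_lift N c0 (c : 'I_N -> R) j : ext0 c0 c (lift ord0 j) = c j.
Proof. by rewrite /ext0 liftK. Qed.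

Lemma ordS_ind N (p : 'I_N.+1 -> Prop) : p ord0 -> (forall j, p (lift ord0 j)) -> forall i, p i.
Proof. by move=> p0 pl i; case: (unliftP ord0 i) => [j ->|->]. Qed.

Lemma sum_ext0 N (c0 : R) (c : 'I_N -> R) (F : 'I_N.+1 -> R -> vec) :
  \sum_i F i (ext0 c0 c i) = F ord0 c0 + \sum_j F (lift ord0 j) (c j).
Proof. by rewrite big_ord_recl ext0_0; congr (_ + _); apply: eq_bigr => j _; rewrite ext0_lift. Qed.

Lemma sumR_ext0 N (c0 : R) (c : 'I_N -> R) :
  \sum_i ext0 c0 c i = c0 + \sum_j c j.
Proof. by rewrite big_ord_recl ext0_0; congr (_ + _); apply: eq_bigr => j _; rewrite ext0_lift. Qed.

Lemma conv_pos N (c x : 'I_N -> R) : (forall i, 0 <= c i) -> \sum_i c i = 1 ->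
  (forall i, 0 < x i) -> 0 < \sum_i c i * x i.
Proof.
move=> c0 c1 xp; have [t t0 tx] := fin_posbound xp.
apply: (lt_le_trans t0); have -> : t = \sum_i c i * t by rewrite -mulr_suml c1 mul1r.
by apply: ler_sum => i _; rewrite ler_wpM2l.
Qed.

Lemma gordan N (a : 'I_N -> vec) :
  (forall c : 'I_N -> R, (forall i, 0 <= c i) -> \sum_i c i = 1 -> \sum_i c i *: a i != 0) ->
  exists y, forall i, 0 < dot (a i) y.
Proof.
elim: N a => [|N IH] a Ha; first by exists 0 => -[].
set b := a ord0; set s := fun j => a (lift ord0 j).
have Hs : forall c : 'I_N -> R, (forall i, 0 <= c i) -> \sum_i c i = 1 -> \sum_i c i *: s i != 0.
  move=> c c0 c1; have := Ha (ext0 0 c).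
  rewrite sumR_ext0 add0r (sum_ext0 0 c (fun i r => r *: a i)) scale0r add0r.
  apply=> //; apply: ordS_ind; rewrite ?ext0_0 ?lexx // => j; rewrite ext0_lift //.
have [y' Hy'] := IH s Hs.
have [by'|by'] := ltP 0 (dot b y').
  by exists y'; apply: ordS_ind.
have bn0 : b != 0.
  have := Ha (ext0 1 (fun _ => 0)).
  rewrite sumR_ext0 big1 // addr0 (sum_ext0 1 (fun _ => 0) (fun i r => r *: a i)) scale1r.
  rewrite big1 ?addr0; last by move=> j _; rewrite scale0r.
  apply=> //; apply: ordS_ind; rewrite ?ext0_0 ?ler01 // => j; rewrite ext0_lift //.
have bb0 : 0 < dot b b by exact: dotvv_gt0.
pose pi (x : vec) := x - (dot x b / dot b b) *: b.
have Hps : forall c : 'I_N -> R, (forall i, 0 <= c i) -> \sum_i c i = 1 -> \sum_i c i *: pi (s i) != 0.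
  move=> c c0 c1; apply/negP => /eqP H0.
  pose sg := \sum_j c j * (dot (s j) b / dot b b).
  have Hsum : \sum_j c j *: s j = sg *: b.
    have : \sum_j c j *: pi (s j) = \sum_j c j *: s j - sg *: b.
      rewrite /sg scaler_suml -sumrB.
      by apply: eq_bigr => j _; rewrite /pi scalerBr scalerA.
    by rewrite H0 => /eqP; rewrite eq_sym subr_eq0 => /eqP.
  have [sg0|sg0] := leP sg 0.
    have s1 : 0 < 1 - sg by lra.
    have E : (- sg / (1 - sg)) *: b + \sum_j (c j / (1 - sg)) *: s j = 0.
      rewrite (eq_bigr (fun j => (1 - sg)^-1 *: (c j *: s j))); last first.
        by move=> j _; rewrite scalerA mulrC.
      rewrite -scaler_sumr Hsum scalerA -scalerDl.
      have -> : - sg / (1 - sg) + (1 - sg)^-1 * sg = 0 by field; rewrite gt_eqF.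
      by rewrite scale0r.
    have := Ha (ext0 (- sg / (1 - sg)) (fun j => c j / (1 - sg))).
    rewrite (sum_ext0 _ _ (fun i r => r *: a i)) /= -/b.
    have -> : \sum_j (c j / (1 - sg)) *: a (lift ord0 j) = \sum_j (c j / (1 - sg)) *: s j by [].
    rewrite E eqxx sumR_ext0 -mulr_suml c1 -mulrDl.
    have -> : - sg + 1 = 1 - sg by rewrite addrC.
    rewrite divff ?gt_eqF // => H; exfalso; apply: notF; apply: H => //.
    apply: ordS_ind; rewrite ?ext0_0.
      by rewrite divr_ge0 // ?oppr_ge0 // ltW.
    by move=> j; rewrite ext0_lift divr_ge0 // ltW.
  have : 0 < \sum_j c j * dot (s j) y' by apply: conv_pos.
  have -> : \sum_j c j * dot (s j) y' = dot (sg *: b) y'.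
    by rewrite -Hsum dotv_suml; apply: eq_bigr => j _; rewrite dotvZl.
  rewrite dotvZl => H; have : sg * dot b y' <= 0 by rewrite pmulr_rle0.
  by rewrite leNgt H.
have [z Hz] := IH _ Hps.
pose z' := pi z.
have Hz' : forall j, 0 < dot (s j) z'.
  move=> j; have := Hz j; rewrite /z' /pi dotvBl dotvBr !dotvZl !dotvZr (dotvC z b).
  by rewrite mulrAC [_ * dot b z]mulrC mulrAC.
have bz' : dot b z' = 0.
  rewrite /z' /pi dotvBr dotvZr (dotvC b z); field; rewrite gt_eqF //.
have [t t0 tH] := @fin_posbound _ (fun j => dot (s j) z' / (`|dot (s j) b| + 1))
  (fun j => divr_gt0 (Hz' j) (ltr_wpDl (normr_ge0 _) ltr01)).
exists (z' + t *: b); apply: ordS_ind.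
  by rewrite -/b dotvDr bz' add0r dotvZr mulr_gt0.
move=> j; rewrite -/(s j) dotvDr dotvZr.
have h : t * (`|dot (s j) b| + 1) <= dot (s j) z'.
  by rewrite -ler_pdivlMr ?tH // ltr_wpDl ?normr_ge0.
have h2 : t * (- `|dot (s j) b|) <= t * dot (s j) b by apply: ler_wpM2l; [exact: ltW | exact: (lerNnormlW (lexx _))].
have := Hz' j; nra.
Qed.


Section Poly.
Variables (m : nat) (V : 'M[R]_(m, d)).
Local Notation P := (conv_rows V).
Local Notation v i := (row i V).

Lemma vert_in i : P (v i).
Proof.
exists (delta_mx 0 i); split; first by move=> j; rewrite mxE ler0n.
split; last exact: rowE.
rewrite (bigD1 i) //= big1 ?addr0 ?mxE ?eqxx //.
by move=> j /negPf ji; rewrite mxE ji andbF.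
Qed.

Lemma conv_le x y M : P x -> (forall i, dot (v i) y <= M) -> dot x y <= M.
Proof.
move=> [w [w0 [w1 ->]]] H; rewrite dotv_mul.
have -> : M = \sum_i w 0 i * M by rewrite -mulr_suml w1 mul1r.
by apply: ler_sum => i _; rewrite ler_wpM2l.
Qed.

Lemma conv_ge x y M : P x -> (forall i, M <= dot (v i) y) -> M <= dot x y.
Proof.
move=> Px H; rewrite -lerN2 -dotvNr; apply: conv_le => // i.
by rewrite dotvNr lerN2.
Qed.

Definition ismax y i0 := forall l, dot (v l) y <= dot (v i0) y.

Lemma vert_face y k : ismax y k -> face_in P y (v k).
Proof. by move=> H; split; [exact: vert_in | move=> z Pz; apply: conv_le]. Qed.

Lemma face_support y i0 (w : 'rV_m) : ismax y i0 -> (forall i, 0 <= w 0 i) -> \sum_i w 0 i = 1 ->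
  dot (v i0) y <= dot (w *m V) y -> forall i, w 0 i != 0 -> dot (v i) y = dot (v i0) y.
Proof.
move=> Hm w0 w1 Hle i wi.
have Hs : \sum_j w 0 j * (dot (v i0) y - dot (v j) y) = dot (v i0) y - dot (w *m V) y.
  rewrite dotv_mul; under eq_bigr do rewrite mulrBr.
  by rewrite sumrB -mulr_suml w1 mul1r.
have Hge : forall j, 0 <= w 0 j * (dot (v i0) y - dot (v j) y).
  by move=> j; rewrite mulr_ge0 // subr_ge0.
have H0 : \sum_j w 0 j * (dot (v i0) y - dot (v j) y) = 0.
  apply/eqP; rewrite eq_le sumr_ge0 // andbT Hs subr_le0 //.
have := (psumr_eq0P (fun j _ => Hge j) H0) i isT.
by move/eqP; rewrite mulf_eq0 (negPf wi) /= subr_eq0 => /eqP.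
Qed.

Definition DF y i0 : 'M[R]_(m, d) :=
  \matrix_i (if dot (v i) y == dot (v i0) y then v i - v i0 else 0).

Lemma face_diff y i0 x : ismax y i0 -> face_in P y x ->
  exists w : 'rV_m, x - v i0 = w *m DF y i0.
Proof.
move=> Hm [[w [w0 [w1 xE]]] Hx].
have Hs := face_support Hm w0 w1.
rewrite xE in Hx.
exists w; rewrite xE !mulmx_sum_row.
have -> : v i0 = \sum_i w 0 i *: v i0 by rewrite -scaler_suml w1 scale1r.
rewrite -sumrB; apply: eq_bigr => i _; rewrite rowK.
have [wi|wi] := eqVneq (w 0 i) 0.
  by rewrite wi !scale0r subr0.
by rewrite (Hs (Hx _ (vert_in i0)) i wi) eqxx scalerBr.
Qed.

Lemma affdim_face y i0 : ismax y i0 -> is_affdim (face_in P y) (Posz (\rank (DF y i0))).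
Proof.
move=> Hm; split.
  exists (v i0), (rowsub (maxrankfun (DF y i0)) (DF y i0)); split; first exact: vert_face.
  split; last exact/eqP/maxrowsub_free.
  move=> i; rewrite row_rowsub rowK; case: ifP => [/eqP E|_].
    by rewrite addrC subrK; apply: vert_face => l; rewrite E.
  by rewrite addr0; apply: vert_face.
move=> [x0 [X [Fx0 [FX rX]]]].
have : (X <= DF y i0)%MS.
  apply/row_subP => i.
  have [w1 E1] := face_diff Hm (FX i).
  have [w2 E2] := face_diff Hm Fx0.
  have -> : row i X = (w1 - w2) *m DF y i0.
    by rewrite mulmxBl -E1 -E2 opprB addrA subrK addrC addKr.
  exact: submxMl.
by move/mxrankS; rewrite rX ltnn.
Qed.

Lemma face0 : face_in P 0 = P.
Proof.
apply: funext => x; apply: propext; split; first by case.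
by move=> Px; split => // z _; rewrite !dotv0r.
Qed.

Lemma affdimP i0 : is_affdim P (Posz (\rank (DF 0 i0))).
Proof. by rewrite -{1}face0; apply: affdim_face => l; rewrite !dotv0r. Qed.

End Poly.


Lemma dot_entry a b (A : 'M[R]_(a, d)) (C : 'M[R]_(d, b)) i k :
  dot (row i A) (col k C)^T = (A *m C) i k.
Proof. by rewrite /dotv mxE; apply: eq_bigr => j _; rewrite !mxE. Qed.

Lemma LA a b (A : 'M[R]_(a, d)) (B : 'M[R]_(b, d)) (g : vec) :
  (forall u : vec, (forall i, dot (row i A) u = 0) -> dot g u = 0 -> forall l, dot (row l B) u = 0) ->
  (\rank B <= (\rank A).+1)%N.
Proof.
move=> H.
have sub : (B <= col_mx A g)%MS.
  rewrite submxE; apply/eqP/matrixP => l k.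
  set C := cokermx (col_mx A g).
  have EC := mulmx_coker (col_mx A g); rewrite mul_col_mx -col_mx0 in EC.
  case/eq_col_mx: EC => EA Eg.
  rewrite [RHS]mxE -dot_entry; apply: H => [i|].
    by rewrite dot_entry EA mxE.
  have -> : g = row 0 g by apply/rowP => j; rewrite mxE; congr (g _ _); apply/val_inj; case: (0 : 'I_1) => -[].
  by rewrite dot_entry Eg mxE.
move: sub; rewrite -addsmxE => /mxrankS sub.
apply: (leq_trans sub); apply: leq_trans (mxrank_adds_leqif A g) _.
by apply: (leq_trans (leq_add (leqnn _) (rank_leq_row g))); rewrite addn1.
Qed.


Section Iter.
Variables (n : nat) (V : 'M[R]_(n.+1, d)) (Q : set vec).
Local Notation P := (conv_rows V).
Local Notation v i := (row i V).

Definition Csep y := forall p q, P p -> Q q -> dot p y < dot q y.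
Definition constv y := forall l l', dot (v l) y = dot (v l') y.
Definition Sy y := [set l : 'I_n.+1 | [exists i, dot (v l) y < dot (v i) y]].

Hypothesis HQ : forall y, exists qG, Q qG /\ forall y', normal_cone P (face_in P y) y' ->
  forall q, Q q -> dot qG y' <= dot q y'.

Lemma normal_cone_mem y y' i0 : ismax V y i0 -> ismax V y' i0 ->
  (forall i, dot (v i) y = dot (v i0) y -> dot (v i) y' = dot (v i0) y') ->
  normal_cone P (face_in P y) y'.
Proof.
move=> Hm Hm' Heq x z [[w [w0 [w1 xE]]] Hx] Pz.
have Hs := face_support Hm w0 w1.
rewrite xE in Hx; have {}Hs := Hs (Hx _ (vert_in V i0)).
apply: (@le_trans _ _ (dot (v i0) y')); first exact: (conv_le Pz Hm').
rewrite xE dotv_mul.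
have -> : dot (v i0) y' = \sum_i w 0 i * dot (v i0) y' by rewrite -mulr_suml w1 mul1r.
rewrite le_eqVlt; apply/orP; left; apply/eqP; apply: eq_bigr => i _.
have [->|wi] := eqVneq (w 0 i) 0; first by rewrite !mul0r.
by rewrite Heq // Hs.
Qed.

Lemma facet_of y i0 l : ismax V y i0 -> dot (v l) y < dot (v i0) y ->
  (\rank (DF V 0 i0) <= (\rank (DF V y i0)).+1)%N -> is_facet P (face_in P y).
Proof.
move=> Hm Hl Hr; split; first by right; exists y.
exists (Posz (\rank (DF V 0 i0))); split; first exact: affdimP.
have lt : (DF V y i0 < DF V 0 i0)%MS.
  rewrite ltmxE; apply/andP; split.
    apply/row_subP => i; rewrite rowK; case: ifP => _; last exact: sub0mx.
    have -> : v i - v i0 = row i (DF V 0 i0) by rewrite rowK !dotv0r eqxx.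
    exact: row_sub.
  apply/negP => /(submx_trans (row_sub l _)) /submxP [w Ew].
  move: Ew; rewrite rowK !dotv0r eqxx => Ew.
  have : dot (v l - v i0) y = 0.
    rewrite Ew dotv_mul big1 // => i _; rewrite rowK.
    case: ifP => [/eqP E|_]; first by rewrite dotvBl E subrr mulr0.
    by rewrite dotv0l mulr0.
  by rewrite dotvBl => /eqP; rewrite subr_eq0 => /eqP E; move: Hl; rewrite E ltxx.
move: lt; rewrite ltmxErank => /andP [_ lt].
have E : \rank (DF V 0 i0) = (\rank (DF V y i0)).+1 by apply/anti_leq; rewrite Hr lt.
have K1 : forall k : nat, (k.+1%:Z - 1 = k%:Z) by move=> k; rewrite -addn1 PoszD addrK.
rewrite E K1.
exact: affdim_face.
Qed.

Lemma IL_step y : Csep y ->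
  constv y \/ (exists y', Csep y' /\ (#|Sy y'| < #|Sy y|)%N) \/ is_facet P (face_in P y).
Proof.
move=> Cy.
have [i0 Hm] := fin_argmax (fun i => dot (v i) y) ord0.
have [Hc|Hnc] := pselect (forall l, dot (v l) y = dot (v i0) y).
  by left => l l'; rewrite !Hc.
have [l0 Hl0] : exists l, dot (v l) y < dot (v i0) y.
  apply: contra_notP Hnc => H l; apply/eqP; rewrite eq_le Hm /=.
  by rewrite leNgt; apply/negP => h; apply: H; exists l.
right.
have [qG [QqG HqG]] := HQ y.
pose g := v i0 - qG.
pose D0 := DF V 0 i0.
pose Dy := DF V y i0.
have D0E : forall l, row l D0 = v l - v i0 by move=> l; rewrite rowK !dotv0r eqxx.
have [[u [Hu1 [Hu2 [l Hl]]]]|Hno] := pselect (exists u, (forall i, dot (row i Dy) u = 0) /\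
    dot g u = 0 /\ exists l, 0 < dot (row l D0) u); last first.
  right; apply: (facet_of Hm Hl0); apply: LA (g) _ => u Hu1 Hu2 l.
  have [lt|gt|//] := ltgtP (dot (row l D0) u) 0.
    exfalso; apply: Hno; exists (- u); split; first by move=> i; rewrite dotvNr Hu1 oppr0.
    by split; [rewrite dotvNr Hu2 oppr0 | exists l; rewrite dotvNr oppr_gt0].
  by exfalso; apply: Hno; exists u; split => //; split => //; exists l.
left.
pose a k := dot (row k D0) u.
pose b k := dot (v i0) y - dot (v k) y.
have Ia : forall k, dot (v k) y = dot (v i0) y -> a k = 0.
  move=> k Ek; have := Hu1 k; rewrite /a D0E rowK Ek eqxx //.
have [ls Hls Hmin] := @fin_argmin _ (fun k => 0 < a k) (fun k => b k / a k) l Hl.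
have bls : 0 < b ls.
  rewrite /b subr_gt0 lt_neqAle Hm andbT; apply/negP => /eqP E.
  by move: Hls; rewrite Ia ?ltxx.
pose t := b ls / a ls.
have t0 : 0 < t by rewrite divr_gt0.
pose y' := y + t *: u.
have dy' : forall k, dot (v k) y' = dot (v k) y + t * dot (v k) u.
  by move=> k; rewrite dotvDr dotvZr.
have aE : forall k, a k = dot (v k) u - dot (v i0) u by move=> k; rewrite /a D0E dotvBl.
have c1 : ismax V y' i0.
  move=> k; rewrite !dy'.
  have := Hm k; have := aE k; rewrite /b.
  have [ak|ak] := ltP 0 (a k).
    have := Hmin k ak; rewrite ler_pdivlMr // -/t => h1 h2 h3.
    rewrite h2 mulrBr /b in h1; lra.
  move=> h1 h2.
  have : t * a k <= 0 by rewrite pmulr_rle0.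
  rewrite h1 mulrBr; lra.
have c2 : forall i, dot (v i) y = dot (v i0) y -> dot (v i) y' = dot (v i0) y'.
  move=> i Ei; rewrite !dy' Ei; have := Ia i Ei; rewrite aE => /eqP; rewrite subr_eq0 => /eqP ->.
  by [].
have c3 : dot (v ls) y' = dot (v i0) y'.
  rewrite !dy'; have := aE ls; rewrite /t => h.
  have : b ls / a ls * a ls = b ls by rewrite divfK // gt_eqF.
  rewrite /b h => h2; have := h2; lra.
have Ky : normal_cone P (face_in P y) y by apply: (normal_cone_mem Hm Hm).
have Ky' : normal_cone P (face_in P y) y' by apply: (normal_cone_mem Hm c1 c2).
exists y'; split.
  move=> p q Pp Qq.
  have h1 : dot p y' <= dot (v i0) y' by exact: (conv_le Pp c1).
  have h2 : dot qG y' <= dot q y' by apply: HqG.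
  have h3 : dot (v i0) y < dot qG y by apply: Cy => //; apply: vert_in.
  have h4 : dot (v i0) u = dot qG u by move: Hu2; rewrite /g dotvBl => /eqP; rewrite subr_eq0 => /eqP.
  move: h2; rewrite dotvDr dotvZr; move: h1; rewrite dy' h4; lra.
have Hsub : Sy y' \subset Sy y.
  apply/fintype.subsetP => k; rewrite !inE => /existsP [i Hi]; apply/existsP; exists i0.
  have Hk : dot (v k) y' < dot (v i0) y' by apply: lt_le_trans Hi (c1 i).
  rewrite lt_neqAle Hm andbT; apply/negP => /eqP E.
  by move: Hk; rewrite c2 ?ltxx.
have H1 : ls \in Sy y by rewrite inE; apply/existsP; exists i0; rewrite -subr_gt0.
have H2 : ls \notin Sy y'.
  apply/negP; rewrite inE; move/existsP => -[i]; rewrite c3 => h; have := c1 i; rewrite leNgt h.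
  by [].
apply: proper_card; apply/properP; split => //; by exists ls.
Qed.

Lemma IL N y : (#|Sy y| <= N)%N -> Csep y ->
  exists y', Csep y' /\ (constv y' \/ is_facet P (face_in P y')).
Proof.
elim: N y => [|N IH] y HN Cy; have [Hc|[[y' [Cy' Hlt]]|Hf]] := IL_step Cy.
- by exists y; split => //; left.
- by move: Hlt; rewrite ltnNge (leq_trans HN).
- by exists y; split => //; right.
- by exists y; split => //; left.
- by apply: (IH y') => //; rewrite -ltnS (leq_trans Hlt).
- by exists y; split => //; right.
Qed.

End Iter.


Lemma gordan_fin (I : finType) (a : I -> vec) :
  (forall c : I -> R, (forall i, 0 <= c i) -> \sum_i c i = 1 -> \sum_i c i *: a i != 0) ->
  exists y, forall i, 0 < dot (a i) y.
Proof.
move=> H.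
suff [y Hy] : exists y, forall k, 0 < dot (a (@enum_val I I k)) y.
  by exists y => i; have := Hy (enum_rank i); rewrite enum_rankK.
apply: (@gordan _ (fun k => a (@enum_val I I k))).
  move=> c c0 c1; have := H (fun x => c (enum_rank x)) (fun x => c0 _).
  have E : forall (F : I -> vec), \sum_i F i = \sum_k F (@enum_val I I k).
    by move=> F; rewrite (reindex (@enum_val I I)) //; apply: onW_bij; exact: enum_val_bij.
  have ER : forall (F : I -> R), \sum_i F i = \sum_k F (@enum_val I I k).
    by move=> F; rewrite (reindex (@enum_val I I)) //; apply: onW_bij; exact: enum_val_bij.
  rewrite ER; under eq_bigr do rewrite enum_valK.
  move=> /(_ c1); rewrite E.
  by under eq_bigr do rewrite enum_valK.
Qed.

Section Main.
Variables (n m : nat) (V : 'M[R]_(n.+1, d)) (W : 'M[R]_(m.+1, d)).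
Local Notation P := (conv_rows V).
Local Notation Q := (conv_rows W).

Lemma vert_sep y : (forall i j, dot (row i V) y < dot (row j W) y) -> Csep V Q y.
Proof.
move=> H p q Pp Qq.
have [i Hi] := fin_argmax (fun i => dot (row i V) y) ord0.
have [j _ Hj] := @fin_argmin _ predT (fun j => dot (row j W) y) ord0 isT.
apply: (@le_lt_trans _ _ (dot (row i V) y)); first exact: conv_le Pp Hi.
apply: (lt_le_trans (H i j)); apply: conv_ge Qq _ => k; exact: Hj.
Qed.

Lemma perturb y z : Csep V Q y -> exists2 t, 0 < t & Csep V Q (y + t *: z).
Proof.
move=> Cy.
pose f (ij : 'I_n.+1 * 'I_m.+1) := dot (row ij.2 W - row ij.1 V) y / (`|dot (row ij.2 W - row ij.1 V) z| + 1).
have fp : forall ij, 0 < f ij.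
  move=> [i j]; rewrite /f divr_gt0 ?ltr_wpDl ?normr_ge0 //.
  by rewrite dotvBl subr_gt0; apply: Cy; apply: vert_in.
have [t t0 tH] := fin_posbound fp.
exists t => //; apply: vert_sep => i j.
have := tH (i, j); rewrite /f /= ler_pdivlMr ?ltr_wpDl ?normr_ge0 // => h.
have h2 : t * (- `|dot (row j W - row i V) z|) <= t * dot (row j W - row i V) z.
  by apply: ler_wpM2l; [exact: ltW | exact: (lerNnormlW (lexx _))].
have h3 : 0 < dot (row j W - row i V) y by rewrite dotvBl subr_gt0; apply: Cy; apply: vert_in.
rewrite -subr_gt0 -dotvBl dotvDr dotvZr; nra.
Qed.

End Main.

Lemma sep_final (P Q : set vec) n m (V : 'M[R]_(n.+1, d)) (W : 'M[R]_(m.+1, d)) y :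
  P = conv_rows V -> Q = conv_rows W -> Csep V (conv_rows W) y ->
  exists c, strictly_separates P Q y c.
Proof.
move=> -> -> Cy.
have [i Hi] := fin_argmax (fun i => dot (row i V) y) ord0.
have [j _ Hj] := @fin_argmin _ predT (fun j => dot (row j W) y) ord0 isT.
have h : dot (row i V) y < dot (row j W) y by apply: Cy; apply: vert_in.
exists ((dot (row i V) y + dot (row j W) y) / 2); split.
  move=> x Px; have := conv_le Px Hi; lra.
move=> x Qx; have : dot (row j W) y <= dot x y by apply: conv_ge Qx _ => k; exact: Hj.
lra.
Qed.

Lemma facet_exists n (V : 'M[R]_(n.+1, d)) l l' : row l V != row l' V ->
  exists z, is_facet (conv_rows V) (face_in (conv_rows V) z).
Proof.
move=> nll.
pose z0 := row l V - row l' V.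
have hz : dot (row l' V) z0 < dot (row l V) z0.
  by rewrite -subr_gt0 -dotvBl dotvv_gt0 // subr_eq0.
have [i0 Hm] := fin_argmax (fun i => dot (row i V) z0) ord0.
pose q' := row i0 V + (row i0 V - row l' V).
pose Q' := fun x : vec => x = q'.
have HQ : forall y, exists qG, Q' qG /\ forall y', normal_cone (conv_rows V) (face_in (conv_rows V) y) y' ->
  forall q, Q' q -> dot qG y' <= dot q y'.
  by move=> y; exists q'; split => // y' _ q ->.
have C0 : Csep V Q' z0.
  move=> p q Pp ->; have := conv_le Pp Hm; have := Hm l.
  rewrite /q' dotvDl dotvBl /=; lra.
have [y [Cy [Hc|Hf]]] := IL HQ (leqnn _) C0; last by exists y.
exfalso; have := Cy (row i0 V) q' (vert_in _ _) erefl.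
by rewrite /q' dotvDl dotvBl (Hc l' i0) subrr addr0 ltxx.
Qed.

End Basics.

Unset Implicit Arguments.

Theorem lemma2p4 (R : realType) (d : nat) (P Q : set 'rV[R]_d) :
  is_polytope P -> is_polytope Q -> P `&` Q = set0 ->
  minkowski_equivalent P (oppset Q) ->
  exists (y : 'rV[R]_d) (c : R),
    strictly_separates P Q y c /\
    exists F : set 'rV[R]_d, is_facet P F /\ normal_cone P F y.
Proof.
move=> [n [V PE]] [m [W QE]] disj Meq.
have [y0 Hy0] : exists y, forall ij : 'I_n.+1 * 'I_m.+1, 0 < dotv (row ij.2 W - row ij.1 V) y.
  apply: (@gordan_fin R d _ (fun ij : 'I_n.+1 * 'I_m.+1 => row ij.2 W - row ij.1 V)).
  move=> c c0 c1; apply/negP => /eqP H0.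
  pose wP := \row_i \sum_j c (i, j).
  pose wQ := \row_j \sum_i c (i, j).
  have EP : wP *m V = \sum_ij c ij *: row ij.1 V.
    rewrite mulmx_sum_row; under eq_bigr do rewrite mxE scaler_suml.
    by rewrite pair_bigA; apply: eq_bigr => -[i j] _.
  have EQ : wQ *m W = \sum_ij c ij *: row ij.2 W.
    rewrite mulmx_sum_row; under eq_bigr do rewrite mxE scaler_suml.
    by rewrite exchange_big pair_bigA; apply: eq_bigr => -[i j] _.
  have Ex : wP *m V = wQ *m W.
    apply/eqP; rewrite EP EQ eq_sym -subr_eq0 -sumrB; apply/eqP; rewrite -[RHS]H0.
    by apply: eq_bigr => ij _; rewrite scalerBr.
  have : (P `&` Q) (wP *m V).
    rewrite PE QE; split.
      exists wP; split; first by move=> i; rewrite mxE sumr_ge0.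
      split => //; rewrite -c1; under eq_bigr do rewrite mxE.
      by rewrite pair_bigA; apply: eq_bigr => -[i j] _.
    rewrite Ex; exists wQ; split; first by move=> j; rewrite mxE sumr_ge0.
    split => //; rewrite -c1; under eq_bigr do rewrite mxE.
    by rewrite exchange_big pair_bigA; apply: eq_bigr => -[i j] _.
  by rewrite disj.
have C0 : Csep V (conv_rows W) y0.
  apply: vert_sep => i j; have := Hy0 (i, j); rewrite /= dotvBl subr_gt0 //.
have HQ : forall y, exists qG, conv_rows W qG /\ forall y', normal_cone (conv_rows V) (face_in (conv_rows V) y) y' ->
  forall q, conv_rows W q -> dotv qG y' <= dotv q y'.
  move=> y.
  have : normal_fan P (normal_cone P (face_in P y)) by exists y.
  rewrite Meq => -[y'' E].
  have [j _ Hj] := @fin_argmin R _ predT (fun j => dotv (row j W) y'') ord0 isT.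
  have Fx : face_in (oppset Q) y'' (- row j W).
    split; first by rewrite /oppset /= opprK QE; apply: vert_in.
    move=> z Qz; rewrite /oppset /= QE in Qz.
    have := conv_ge Qz (fun k => Hj k isT).
    by rewrite !dotvNl => h; rewrite lerNr.
  exists (row j W); split; first exact: vert_in.
  move=> y' Ky' q Qq.
  rewrite -PE E in Ky'.
  have := Ky' _ (- q) Fx; rewrite /oppset /= opprK QE => /(_ Qq).
  by rewrite !dotvNl lerN2.
have [y1 [C1 [Hc|Hf]]] := IL HQ (leqnn _) C0; last first.
  have [c Hc] := sep_final PE QE C1.
  exists y1, c; split => //; exists (face_in P y1); rewrite PE; split => //.
  by move=> x z [_ Fx] Pz; apply: Fx.
have [Hall|Hnall] := pselect (forall l, row l V = row 0 V).
  have [c Hcs] := sep_final PE QE C1.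
  exists y1, c; split; first exact: Hcs; exists set0; split; last by move=> x z.
  split; first by left.
  exists 0; split.
    have := affdimP V (0 : 'I_n.+1).
    suff -> : DF V 0 0 = 0 by rewrite mxrank0 PE.
    by apply/row_matrixP => i; rewrite rowK row0 Hall subrr; case: ifP.
  by [].
have [l Hl] : exists l, row l V != row 0 V.
  apply: contra_notP Hnall => H l; apply/eqP; apply: contra_notT H => h; by exists l.
have [z Hz] := facet_exists Hl.
have [t t0 Ct] := perturb z C1.
have Ef : face_in (conv_rows V) (y1 + t *: z) = face_in (conv_rows V) z.
  have cst : forall x, conv_rows V x -> dotv x y1 = dotv (row 0 V) y1.
    move=> x Px.
    have h1 : dotv x y1 <= dotv (row 0 V) y1 by apply: conv_le Px _ => k; rewrite (Hc k 0).
    have h2 : dotv (row 0 V) y1 <= dotv x y1 by apply: conv_ge Px _ => k; rewrite (Hc k 0).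
    by apply/eqP; rewrite eq_le h1 h2.
  apply: funext => x; apply: propext; split => -[Px Hx]; split => // z' Pz'.
    have := Hx z' Pz'; rewrite !dotvDr !dotvZr !cst // lerD2l ler_pM2l //.
  rewrite !dotvDr !dotvZr !cst // lerD2l ler_pM2l //; exact: Hx.
have [c Hcs] := sep_final PE QE Ct.
exists (y1 + t *: z), c; split => //; exists (face_in P (y1 + t *: z)); rewrite PE; split.
  by rewrite Ef.
by move=> x z' [_ Fx] Pz; apply: Fx.
Qed.
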